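(* Let $p,q\ge 1$ be integers with $p+q\ge 3$. Then: (i) $\mathbb{O}_{p,q}\simeq\mathbb{O}_{q,p}$ as graded algebras; (ii) $\mathbb{O}_{p,q+4}\simeq\mathbb{O}_{p+4,q}$ as graded algebras; (iii) every isomorphism preserving the structure of $\mathbb{Z}_2^n$-graded algebra between algebras $\mathbb{O}_{p,q}$ and $\mathbb{O}_{p',q'}$ (with $p,q,p',q'\ge 1$, $p+q=p'+q'=n$) is a combination of the isomorphisms in (i) and (ii); that is, such an isomorphism exists only if $(p',q')$ can be obtained from $(p,q)$ by finitely many applications of the isomorphisms in (i) and (ii); (iv) for $n\ge 5$, there is no isomorphism preserving the structure of $\mathbb{Z}_2^n$-graded algebra between $\mathbb{O}_{n,0}$ and $\mathbb{O}_{0,n}$, nor between either of them and any $\mathbb{O}_{p,q}$ with $p+q=n$, $(p,q)\notin\{(n,0),(0,n)\}$.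
   Context: $\mathbb{Z}_2=\{0,1\}$ is the field of two elements. For $f:\mathbb{Z}_2^n\times\mathbb{Z}_2^n\to\mathbb{Z}_2$, the twisted group algebra $(\mathbb{R}[\mathbb{Z}_2^n],f)$ is the real vector space with basis $\{u_x: x\in\mathbb{Z}_2^n\}$ and bilinear product $u_x\cdot u_y=(-1)^{f(x,y)}u_{x+y}$. For integers $p,q\ge0$ with $n=p+q\ge3$, $\mathbb{O}_{p,q}$ is the twisted group algebra with $f(x,y)=\sum_{1\le i<j<k\le n}(x_ix_jy_k+x_iy_jx_k+y_ix_jx_k)+\sum_{1\le i\le j\le n}x_iy_j+\sum_{1\le i\le p}x_iy_i$. An element is homogeneous if it is a scalar multiple of some $u_x$. An isomorphism preserving the structure of $\mathbb{Z}_2^n$-graded algebra (a graded isomorphism) between $\mathbb{O}_{p,q}$ and $\mathbb{O}_{p',q'}$, $p+q=p'+q'=n$, is a real algebra isomorphism sending homogeneous elements to homogeneous elements; ''$\simeq$ as graded algebras'' means such an isomorphism exists. *)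

(* Defs.v *)
From HB Require Import structures.
From mathcomp Require Import all_boot all_order all_algebra.
From mathcomp Require Import reals.
Set Implicit Arguments. Unset Strict Implicit. Unset Printing Implicit Defensive.
Import Order.TTheory GRing.Theory Num.Theory.
Local Open Scope ring_scope.

Notation Z2n n := {ffun 'I_n -> bool}.

Definition z2add (n : nat) (x y : Z2n n) : Z2n n := [ffun i => x i (+) y i].

(* The twisting function f of O_{p,q}, with n = p + q (so q = n - p),
   computed in Z_2 as the parity of the integer sum. *)
Definition Of (n p : nat) (x y : Z2n n) : bool :=
  odd ( (\sum_(i < n) \sum_(j < n | (i < j)%N) \sum_(k < n | (j < k)%N)
           (x i * x j * y k + x i * y j * x k + y i * x j * x k))
      + (\sum_(i < n) \sum_(j < n | (i <= j)%N) (x i * y j))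
      + (\sum_(i < n | (i < p)%N) (x i * y i)) )%N.

(* Elements of the twisted group algebra (R[Z_2^n], f): coordinate functions
   on the basis {u_x : x in Z_2^n}. *)
Notation Oelt R n := {ffun Z2n n -> R}.

Definition Ou (R : realType) (n : nat) (x : Z2n n) : Oelt R n :=
  [ffun y => (y == x)%:R].

(* Bilinear product extending u_x . u_y = (-1)^{f(x,y)} u_{x+y}. *)
Definition Omul (R : realType) (n p : nat) (a b : Oelt R n) : Oelt R n :=
  [ffun z => \sum_(x : Z2n n) \sum_(y : Z2n n | z2add x y == z)
               (-1) ^+ @Of n p x y * a x * b y].

Definition Oscale (R : realType) (n : nat) (c : R) (a : Oelt R n) : Oelt R n :=
  [ffun y => c * a y].

Definition homogeneous (R : realType) (n : nat) (a : Oelt R n) : Prop :=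
  exists (c : R) (x : Z2n n), a = @Oscale R n c (@Ou R n x).

(* A graded isomorphism between O_{p, n-p} and O_{p', n-p'}. *)
Definition graded_iso (R : realType) (n p p' : nat) : Prop :=
  exists phi : Oelt R n -> Oelt R n,
    [/\ (forall (c : R) (a b : Oelt R n), phi (@Oscale R n c a + b) = @Oscale R n c (phi a) + phi b),
        bijective phi,
        (forall a b : Oelt R n, phi (@Omul R n p a b) = @Omul R n p' (phi a) (phi b))
      & (forall a : Oelt R n, @homogeneous R n a -> @homogeneous R n (phi a))].

Definition Oiso (R : realType) (p q p' q' : nat) : Prop :=
  (p + q = p' + q')%N /\ graded_iso R (p + q) p p'.

Inductive Ostep : nat * nat -> nat * nat -> Prop :=
| Ostep_swap p q : (1 <= p)%N -> (1 <= q)%N -> (3 <= p + q)%N -> Ostep (p, q) (q, p)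
| Ostep_shift p q : (1 <= p)%N -> (1 <= q)%N -> Ostep (p, q + 4)%N (p + 4, q)%N
| Ostep_unshift p q : (1 <= p)%N -> (1 <= q)%N -> Ostep (p + 4, q)%N (p, q + 4)%N.

Inductive Oreach : nat * nat -> nat * nat -> Prop :=
| Oreach_refl a : Oreach a a
| Oreach_step a b c : Ostep a b -> Oreach b c -> Oreach a c.

(* Main.v *)
Require Import Defs.
From HB Require Import structures.
From mathcomp Require Import all_boot all_order all_algebra.
From mathcomp Require Import reals.
From mathcomp Require Import all_field all_fingroup.
From mathcomp Require Import ring zify.
Set Implicit Arguments. Unset Strict Implicit. Unset Printing Implicit Defensive.
Import Order.TTheory GRing.Theory Num.Theory.


Local Open Scope ring_scope.


Lemma z2_cases (a : 'Z_2) : a = 0 \/ a = 1.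
Proof. case: a => m; case: m => [|[|m]] H; [left|right|]; try by apply/val_inj. by []. Qed.
Lemma z2_2 : (2 : 'Z_2) = 0. Proof. by apply/val_inj. Qed.
Lemma z2_opp (a : 'Z_2) : - a = a.
Proof. by case: (z2_cases a) => ->; apply/val_inj. Qed.
Lemma z2_xx (a : 'Z_2) : a + a = 0.
Proof. by case: (z2_cases a) => ->; apply/val_inj. Qed.

Definition toZ (b : bool) : 'Z_2 := (b : nat)%:R.
Lemma toZ_addb a b : toZ (a (+) b) = toZ a + toZ b.
Proof. by case: a; case: b; apply/val_inj. Qed.
Lemma toZ_inj : injective toZ.
Proof. by case; case => // /(congr1 val). Qed.
Lemma toZ_odd m : toZ (odd m) = m%:R.
Proof. by rewrite /toZ -(@Zp_nat_mod 2 _ m) // modn2. Qed.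

Section Z2W.
Variable n : nat.
Implicit Types x y z : Z2n n.
Definition z0 : Z2n n := [ffun _ => false].
Lemma z2addC x y : z2add x y = z2add y x.
Proof. by apply/ffunP=> i; rewrite !ffunE addbC. Qed.
Lemma z2addA x y z : z2add x (z2add y z) = z2add (z2add x y) z.
Proof. by apply/ffunP=> i; rewrite !ffunE addbA. Qed.
Lemma z2add0 x : z2add z0 x = x.
Proof. by apply/ffunP=> i; rewrite !ffunE. Qed.
Lemma z2addx0 x : z2add x z0 = x.
Proof. by apply/ffunP=> i; rewrite !ffunE addbF. Qed.
Lemma z2addxx x : z2add x x = z0.
Proof. by apply/ffunP=> i; rewrite !ffunE addbb. Qed.

Definition L x : {ffun 'I_n -> 'Z_2} := [ffun i => toZ (x i)].
Lemma L_add x y : L (z2add x y) = L x + L y.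
Proof. by apply/ffunP=> i; rewrite !ffunE toZ_addb. Qed.

Implicit Types u v w : {ffun 'I_n -> 'Z_2}.
Definition TS (h : 'I_n -> 'I_n -> 'I_n -> 'Z_2) : 'Z_2 :=
  \sum_(i < n) \sum_(j < n | (i < j)%N) \sum_(k < n | (j < k)%N) h i j k.
Lemma TS_ext h1 h2 : (forall i j k, h1 i j k = h2 i j k) -> TS h1 = TS h2.
Proof. by move=> e; apply: eq_bigr=> i _; apply: eq_bigr=> j _; apply: eq_bigr. Qed.
Lemma TS_add h1 h2 : TS h1 + TS h2 = TS (fun i j k => h1 i j k + h2 i j k).
Proof.
rewrite /TS -big_split; apply: eq_bigr=> i _; rewrite -big_split.
by apply: eq_bigr=> j _; rewrite -big_split.
Qed.
Lemma TS0 h : (forall i j k, h i j k = 0) -> TS h = 0.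
Proof. by move=> e; rewrite /TS big1 // => i _; rewrite big1 // => j _; rewrite big1. Qed.

Definition C3 u v w := TS (fun i j k => u i * v j * w k + u i * w j * v k + w i * u j * v k).
Lemma C3D1 u u' v w : C3 (u + u') v w = C3 u v w + C3 u' v w.
Proof. rewrite /C3 TS_add; apply: TS_ext=> i j k; rewrite !ffunE; ring. Qed.
Lemma C3D2 u v v' w : C3 u (v + v') w = C3 u v w + C3 u v' w.
Proof. rewrite /C3 TS_add; apply: TS_ext=> i j k; rewrite !ffunE; ring. Qed.
Lemma C3D3 u v w w' : C3 u v (w + w') = C3 u v w + C3 u v w'.
Proof. rewrite /C3 TS_add; apply: TS_ext=> i j k; rewrite !ffunE; ring. Qed.

Definition Bl (p : nat) u v := \sum_(i < n) \sum_(j < n | (i <= j)%N) u i * v j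
   + \sum_(i < n | (i < p)%N) u i * v i.
Lemma BlD1 p u u' v : Bl p (u + u') v = Bl p u v + Bl p u' v.
Proof.
rewrite /Bl addrACA -!big_split /=; congr (_ + _).
  by apply: eq_bigr=> i _; rewrite -big_split; apply: eq_bigr=> j _; rewrite ffunE mulrDl.
by apply: eq_bigr=> i _; rewrite ffunE mulrDl.
Qed.
Lemma BlD2 p u v v' : Bl p u (v + v') = Bl p u v + Bl p u v'.
Proof.
rewrite /Bl addrACA -!big_split /=; congr (_ + _).
  by apply: eq_bigr=> i _; rewrite -big_split; apply: eq_bigr=> j _; rewrite ffunE mulrDr.
by apply: eq_bigr=> i _; rewrite ffunE mulrDr.
Qed.

Definition FZ p u v := C3 u u v + Bl p u v.

Lemma Of_Z2 p x y : toZ (@Of n p x y) = FZ p (L x) (L y).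
Proof.
rewrite /Of toZ_odd !natrD !natr_sum /FZ /C3 /TS /Bl -addrA; congr (_ + (_ + _)).
- apply: eq_bigr=> i _; rewrite natr_sum; apply: eq_bigr=> j _; rewrite natr_sum.
  by apply: eq_bigr=> k _; rewrite !natrD !natrM !ffunE.
- by apply: eq_bigr=> i _; rewrite natr_sum; apply: eq_bigr=> j _; rewrite natrM !ffunE.
- by apply: eq_bigr=> i _; rewrite natrM !ffunE.
Qed.

Lemma C3_s1 u v : C3 u v u + C3 v u u = 0.
Proof.
rewrite /C3 TS_add TS0 // => i j k.
transitivity (2 * (u i * v j * u k + u i * u j * v k + v i * u j * u k)); first ring.
by rewrite z2_2 mul0r.
Qed.
Lemma C3_s2 u v : C3 u v v + C3 v u v = 0.
Proof.
rewrite /C3 TS_add TS0 // => i j k.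
transitivity (2 * (u i * v j * v k + v i * u j * v k + v i * v j * u k)); first ring.
by rewrite z2_2 mul0r.
Qed.
Lemma C3_s4 u v w : C3 u w v + C3 v w u + C3 w u v + C3 w v u = 0.
Proof.
rewrite /C3 !TS_add TS0 // => i j k.
transitivity (2 * (u i * v j * w k + u i * w j * v k + v i * u j * w k
   + v i * w j * u k + w i * u j * v k + w i * v j * u k)); first ring.
by rewrite z2_2 mul0r.
Qed.

Definition alZ p u := FZ p u u.

Lemma FZ_F1 p u v : FZ p u v + FZ p v u = alZ p (u + v) + alZ p u + alZ p v.
Proof.
have e : FZ p u v + FZ p v u = (alZ p (u + v) - alZ p u - alZ p v)
   - (C3 u v u + C3 v u u) - (C3 u v v + C3 v u v).
  by rewrite /alZ /FZ !C3D1 !C3D2 !C3D3 !BlD1 !BlD2; ring.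
by rewrite e C3_s1 C3_s2 !subr0 !z2_opp.
Qed.

Lemma FZ_D3 p u v w : alZ p (u + v + w) + alZ p (u + v) + alZ p (u + w) + alZ p (v + w)
   + alZ p u + alZ p v + alZ p w = C3 u v w + C3 v u w.
Proof.
have e : alZ p (u + v + w) - alZ p (u + v) - alZ p (u + w) - alZ p (v + w)
   + alZ p u + alZ p v + alZ p w = C3 u v w + C3 v u w +
   (C3 u w v + C3 v w u + C3 w u v + C3 w v u).
  by rewrite /alZ /FZ !C3D1 !C3D2 !C3D3 !BlD1 !BlD2; ring.
by move: e; rewrite C3_s4 addr0 !z2_opp.
Qed.

Lemma FZ_F2 p u v w : FZ p v w + FZ p (u + v) w + FZ p u (v + w) + FZ p u v
   = C3 u v w + C3 v u w.
Proof.
have e : - FZ p v w + FZ p (u + v) w - FZ p u (v + w) + FZ p u v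
   = C3 u v w + C3 v u w.
  by rewrite /FZ !C3D1 !C3D2 !C3D3 !BlD1 !BlD2; ring.
by move: e; rewrite !z2_opp.
Qed.

Definition al p x := @Of n p x x.

Lemma Of_F1 p x y : @Of n p x y (+) @Of n p y x = al p (z2add x y) (+) al p x (+) al p y.
Proof. by apply: toZ_inj; rewrite !toZ_addb !Of_Z2 L_add FZ_F1. Qed.

Lemma Of_F2 p x y z : @Of n p y z (+) @Of n p (z2add x y) z (+) @Of n p x (z2add y z) (+) @Of n p x y
  = al p (z2add (z2add x y) z) (+) al p (z2add x y) (+) al p (z2add x z) (+) al p (z2add y z)
    (+) al p x (+) al p y (+) al p z.
Proof.
apply: toZ_inj; rewrite !toZ_addb /al !Of_Z2 !L_add FZ_F2.
by have := FZ_D3 p (L x) (L y) (L z); rewrite /alZ => ->.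
Qed.

Lemma L0 : L z0 = 0.
Proof. by apply/ffunP=> i; rewrite !ffunE. Qed.
Lemma Of_x0 p x : @Of n p x z0 = false.
Proof.
apply: toZ_inj; rewrite Of_Z2 L0 /FZ.
have h1 := C3D3 (L x) (L x) 0 0; have h2 := BlD2 p (L x) 0 0.
rewrite addr0 in h1 h2.
have -> : C3 (L x) (L x) 0 = 0 by apply: (addrI (C3 (L x) (L x) 0)); rewrite addr0 -h1.
have -> : Bl p (L x) 0 = 0 by apply: (addrI (Bl p (L x) 0)); rewrite addr0 -h2.
by rewrite addr0.
Qed.

End Z2W.


Local Open Scope ring_scope.


Section Coh.
Variable n : nat.
Variable g : Z2n n -> Z2n n -> bool.
Hypothesis gsym : forall x y, g x y = g y x.
Hypothesis gdiag : forall x, g x x = false.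
Hypothesis gcoc : forall x y z,
  g y z (+) g (z2add x y) z (+) g x (z2add y z) (+) g x y = false.
Hypothesis g0 : forall x, g x (z0 n) = false.

Lemma g0l x : g (z0 n) x = false. Proof. by rewrite gsym g0. Qed.

Lemma cohB X Y e : g X (z2add Y e) = g Y e (+) g (z2add X Y) e (+) g X Y.
Proof. by move: (gcoc X Y e); case: (g X (z2add Y e)); case: (g Y e); case: (g (z2add X Y) e); case: (g X Y). Qed.

Lemma cohA X Y e : g (z2add X e) Y = g X e (+) g (z2add X Y) e (+) g X Y.
Proof.
move: (gcoc X e Y) (cohB X Y e); rewrite (gsym e Y) (z2addC e Y).
by case: (g (z2add X e) Y); case: (g Y e); case: (g X (z2add Y e)); case: (g X e);
  case: (g (z2add X Y) e); case: (g X Y).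
Qed.

Lemma coh_step X Y e a b : (a = z0 n \/ a = e) -> (b = z0 n \/ b = e) ->
  g X a (+) g Y b (+) g (z2add X Y) (z2add a b) (+) g X Y = g (z2add X a) (z2add Y b).
Proof.
case=> -> [] ->; rewrite ?z2addx0 ?z2add0 ?g0 ?g0l ?addFb ?addbF.
- by [].
- by rewrite cohB.
- by rewrite [RHS]cohA.
- rewrite z2addxx g0 addbF [RHS]cohA.
  have h := gcoc (z2add X Y) e e.
  rewrite gdiag z2addxx g0 in h.
  rewrite z2addA.
  have -> : g (z2add (z2add X Y) e) e = g (z2add X Y) e.
    by move: h; case: (g (z2add (z2add X Y) e) e); case: (g (z2add X Y) e).
  rewrite [g X (z2add Y e)]cohB.
  by case: (g X e); case: (g Y e); case: (g (z2add X Y) e); case: (g X Y).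
Qed.

Definition Pr (k : nat) (x : Z2n n) : Z2n n := [ffun i : 'I_n => ((i : nat) < k)%N && x i].
Definition Pe (k : nat) (x : Z2n n) : Z2n n := [ffun i : 'I_n => ((i : nat) == k) && x i].
Definition Ek (k : nat) : Z2n n := [ffun i : 'I_n => ((i : nat) == k)].

Lemma Pe_cases k x : Pe k x = z0 n \/ Pe k x = Ek k.
Proof.
case: (boolP [exists i : 'I_n, ((i : nat) == k) && x i]).
  case/existsP=> i0 /andP[/eqP e0 xi0]; right; apply/ffunP=> i; rewrite !ffunE.
  case: eqP=> //= ei; suff -> : i = i0 by [].
  by apply/val_inj; rewrite /= ei e0.
move=> /existsPn h; left; apply/ffunP=> i; rewrite !ffunE; exact: negbTE (h i).
Qed.

Lemma Pr_add k x y : Pr k (z2add x y) = z2add (Pr k x) (Pr k y).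
Proof. by apply/ffunP=> i; rewrite !ffunE; case: (_ < _)%N. Qed.
Lemma Pe_add k x y : Pe k (z2add x y) = z2add (Pe k x) (Pe k y).
Proof. by apply/ffunP=> i; rewrite !ffunE; case: (_ == _). Qed.
Lemma PrS k x : Pr k.+1 x = z2add (Pr k x) (Pe k x).
Proof.
apply/ffunP=> i; rewrite !ffunE ltnS leq_eqVlt.
case: (eqVneq (i : nat) k) => [->|ne]; rewrite ?ltnn ?eqxx /=; first by case: (x i).
by rewrite addbF.
Qed.
Lemma Pr0 x : Pr 0 x = z0 n. Proof. by apply/ffunP=> i; rewrite !ffunE. Qed.
Lemma Prn x : Pr n x = x. Proof. by apply/ffunP=> i; rewrite !ffunE ltn_ord. Qed.

Definition Sm (m : nat) (x : Z2n n) : bool := \big[addb/false]_(0 <= k < m) g (Pr k x) (Pe k x).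

Lemma Sm_ok m x y : Sm m x (+) Sm m y (+) Sm m (z2add x y) = g (Pr m x) (Pr m y).
Proof.
elim: m => [|m IH]; first by rewrite /Sm !big_nil !Pr0 g0.
rewrite /Sm !big_nat_recr //= -/(Sm m x) -/(Sm m y) -/(Sm m (z2add x y)).
rewrite !PrS -(@coh_step _ _ (Ek m)); [|exact: Pe_cases|exact: Pe_cases].
rewrite -IH Pr_add Pe_add.
by case: (Sm m x); case: (Sm m y); case: (Sm m (z2add x y));
   case: (g (Pr m x) (Pe m x)); case: (g (Pr m y) (Pe m y));
   case: (g (z2add (Pr m x) (Pr m y)) (z2add (Pe m x) (Pe m y))).
Qed.

Lemma coh_exists : exists s : Z2n n -> bool, forall x y, g x y = s x (+) s y (+) s (z2add x y).
Proof. by exists (Sm n) => x y; rewrite Sm_ok !Prn. Qed.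
End Coh.


Local Open Scope ring_scope.


Lemma sgn2 (R : pzRingType) (b : bool) : ((-1) ^+ b * (-1) ^+ b : R) = 1.
Proof. by rewrite -signr_addb addbb. Qed.

Section Constr.
Variables (R : realType) (n p p' : nat) (A : Z2n n -> Z2n n).
Hypothesis Alin : forall x y, A (z2add x y) = z2add (A x) (A y).
Hypothesis Abij : bijective A.
Hypothesis Aal : forall x, al p' (A x) = al p x.

Lemma A0 : A (z0 n) = z0 n.
Proof.
have := Alin (z0 n) (z0 n); rewrite z2addxx => h.
by rewrite h z2addxx.
Qed.

Definition gA x y := @Of n p' (A x) (A y) (+) @Of n p x y.

Lemma gA_sym x y : gA x y = gA y x.
Proof.
have h1 := Of_F1 p' (A x) (A y); have h2 := Of_F1 p x y.
rewrite -Alin !Aal -h2 in h1.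
move: h1; rewrite /gA.
by case: (Of p' (A x) (A y)); case: (Of p' (A y) (A x)); case: (Of p x y); case: (Of p y x).
Qed.

Lemma gA_diag x : gA x x = false.
Proof. by rewrite /gA -/(al p' (A x)) -/(al p x) Aal addbb. Qed.

Lemma gA_coc x y z : gA y z (+) gA (z2add x y) z (+) gA x (z2add y z) (+) gA x y = false.
Proof.
have h1 := Of_F2 p' (A x) (A y) (A z); have h2 := Of_F2 p x y z.
rewrite -!Alin !Aal -h2 in h1.
move: h1; rewrite /gA !Alin.
set a1 := Of p' _ _; set a2 := Of p' _ _; set a3 := Of p' _ _; set a4 := Of p' _ _.
set b1 := Of p _ _; set b2 := Of p _ _; set b3 := Of p _ _; set b4 := Of p _ _.
by case: a1; case: a2; case: a3; case: a4; case: b1; case: b2; case: b3; case: b4.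
Qed.

Lemma gA_0 x : gA x (z0 n) = false.
Proof. by rewrite /gA A0 !Of_x0. Qed.


Lemma gA_s : exists s : Z2n n -> bool, forall x y,
  gA x y = s x (+) s y (+) s (z2add x y).
Proof. exact: coh_exists gA_sym gA_diag gA_coc gA_0. Qed.

Theorem iso_of_A : graded_iso R n p p'.
Proof.
have [s hs] := gA_s.
have [B AB BA] := Abij.
pose phi (a : Oelt R n) : Oelt R n := [ffun z => (-1) ^+ s (B z) * a (B z)].
pose psi (a : Oelt R n) : Oelt R n := [ffun x => (-1) ^+ s x * a (A x)].
have Ainj : injective A := can_inj AB.
have AeqB u z : (A u == z) = (u == B z).
  by apply/eqP/eqP=> [<-|->]; [rewrite AB|rewrite BA].
exists phi; split.
- by move=> c a b; apply/ffunP=> z; rewrite !ffunE; ring.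
- exists psi.
    by move=> a; apply/ffunP=> x; rewrite !ffunE AB mulrA sgn2 mul1r.
  by move=> a; apply/ffunP=> z; rewrite !ffunE BA mulrA sgn2 mul1r.
- move=> a b; apply/ffunP=> z; rewrite !ffunE big_distrr /=.
  rewrite [RHS](reindex_inj Ainj) /=; apply: eq_bigr=> x _.
  rewrite big_distrr /= [RHS](reindex_inj Ainj) /=.
  apply: eq_big=> [y|y]; first by rewrite -Alin AeqB.
  move=> /eqP <-.
  rewrite /phi !ffunE !AB.
  have e : @Of n p' (A x) (A y) = s x (+) s y (+) s (z2add x y) (+) @Of n p x y.
    by rewrite -hs /gA -addbA addbb addbF.
  rewrite e !signr_addb.
  set sx := (-1) ^+ s x; set sy := (-1) ^+ s y; set sxy := (-1) ^+ s (z2add x y).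
  set o := (-1) ^+ _.
  have hx : sx * sx = 1 by exact: sgn2.
  have hy : sy * sy = 1 by exact: sgn2.
  transitivity (sxy * (o * a x * b y) * (sx * sx) * (sy * sy)).
    by rewrite hx hy !mulr1.
  ring.
- move=> a [c [x ->]]; exists (c * (-1) ^+ s x), (A x).
  apply/ffunP=> z; rewrite !ffunE.
  case: (eqVneq z (A x)) => [->|ne].
    by rewrite AB !eqxx !mulr1 mulrC.
  have ne' : B z != x by apply: contraNneq ne => <-; rewrite BA.
  by rewrite (negbTE ne') !mulr0.
Qed.
End Constr.


Local Close Scope ring_scope.


Section NatSym.
Variable X : nat -> bool.
Definition e1 N := (\sum_(i < N) X i)%N.
Definition e2 N := (\sum_(i < N) \sum_(j < N | (i < j)%N) X i * X j)%N.
Definition e2' N := (\sum_(i < N) \sum_(j < N | (i <= j)%N) X i * X j)%N.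
Definition e3 N := (\sum_(i < N) \sum_(j < N | (i < j)%N) \sum_(k < N | (j < k)%N) X i * X j * X k)%N.

Lemma e1S N : e1 N.+1 = (e1 N + X N)%N.
Proof. by rewrite /e1 big_ord_recr. Qed.

Lemma e2S N : e2 N.+1 = (e2 N + e1 N * X N)%N.
Proof.
rewrite /e2 big_ord_recr /= [X in (_ + X)%N]big1 ?addn0; last by move=> j h; move: (ltn_ord j); rewrite ltnS leqNgt h.
rewrite /e1 big_distrl -big_split /=; apply: eq_bigr=> i _.
by rewrite big_mkcond big_ord_recr /= -big_mkcond /= ltn_ord.
Qed.

Lemma e2'S N : e2' N.+1 = (e2' N + e1 N * X N + X N * X N)%N.
Proof.
rewrite /e2' big_ord_recr /=.
have -> : (\sum_(j < N.+1 | N <= j) X N * X j = X N * X N)%N.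
  rewrite (bigD1 ord_max) //= big1 ?addn0 // => j /andP[h ne].
  have : (j : nat) = N by apply/eqP; rewrite eqn_leq h -ltnS ltn_ord.
  by move=> e; move: ne; rewrite -(inj_eq val_inj) /= e eqxx.
congr (_ + _)%N; rewrite /e1 big_distrl -big_split /=.
by apply: eq_bigr=> i _; rewrite big_mkcond big_ord_recr /= -big_mkcond /= ltnW.
Qed.

Lemma e3S N : e3 N.+1 = (e3 N + e2 N * X N)%N.
Proof.
rewrite /e3 big_ord_recr /= [X in (_ + X)%N]big1 ?addn0; last by move=> j h; move: (ltn_ord j); rewrite ltnS leqNgt h.
rewrite /e2 big_distrl -big_split /=; apply: eq_bigr=> i _.
rewrite big_mkcond big_ord_recr /= -big_mkcond /= ltn_ord big_distrl.
rewrite [X in (_ + X)%N]big1 ?addn0; last by move=> j h; move: (ltn_ord j); rewrite ltnS leqNgt h.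
rewrite -big_split /=; apply: eq_bigr=> j _.
by rewrite big_mkcond big_ord_recr /= -big_mkcond /= ltn_ord.
Qed.

Lemma mod4S w : (w.+1 %% 4 = (w %% 4).+1 %% 4)%N.
Proof. by rewrite -addn1 -modnDml addn1. Qed.

Lemma e_par N : [/\ odd (e2 N) = (2 <= e1 N %% 4)%N, odd (e3 N) = (e1 N %% 4 == 3)%N
   & e2' N = (e2 N + e1 N)%N].
Proof.
elim: N => [|N [h2 h3 h']]; first by rewrite /e1 /e2 /e3 /e2' !big_ord0.
rewrite e1S e2S e3S e2'S h'.
case: (X N) => /=; last by rewrite !muln0 !addn0.
rewrite !muln1 addn1 !oddD h2 h3 mod4S.
have hodd : odd (e1 N) = odd (e1 N %% 4) by rewrite odd_mod.
rewrite hodd; move: (ltn_pmod (e1 N) (isT : (0 < 4)%N)).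
case: (e1 N %% 4)%N => [|[|[|[|r]]]] //= _; split => //; ring.
Qed.
End NatSym.

Section Closed.
Variable n : nat.
Definition Wt (x : Z2n n) := (\sum_(i < n) x i)%N.
Definition WPt (p : nat) (x : Z2n n) := (\sum_(i < n | (i < p)%N) x i)%N.

Lemma al_closed p (x : Z2n n) : al p x = (Wt x %% 4 != 0)%N (+) odd (WPt p x).
Proof.
pose X (m : nat) : bool := if insub m is Some i then x i else false.
have XE (i : 'I_n) : X i = x i by rewrite /X valK.
have E3 : (\sum_(i < n) \sum_(j < n | (i < j)%N) \sum_(k < n | (j < k)%N)
           (x i * x j * x k + x i * x j * x k + x i * x j * x k))%N = (3 * e3 X n)%N.
  rewrite /e3 big_distrr; apply: eq_bigr=> i _; rewrite big_distrr; apply: eq_bigr=> j _.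
  by rewrite big_distrr; apply: eq_bigr=> k _; rewrite !XE /= -[3]/(1+1+1)%N !mulnDl !mul1n.
have E2 : (\sum_(i < n) \sum_(j < n | (i <= j)%N) x i * x j)%N = e2' X n.
  by apply: eq_bigr=> i _; apply: eq_bigr=> j _; rewrite !XE.
have E1 : Wt x = e1 X n by apply: eq_bigr=> i _; rewrite XE.
have EP : (\sum_(i < n | (i < p)%N) x i * x i)%N = WPt p x.
  by apply: eq_bigr=> i _; rewrite mulnb andbb.
rewrite /al /Of E3 E2 EP E1.
have [h2 h3 h'] := e_par X n.
rewrite h' !oddD h2 h3 /=.
have hodd : odd (e1 X n) = odd (e1 X n %% 4) by rewrite odd_mod.
rewrite hodd; move: (ltn_pmod (e1 X n) (isT : (0 < 4)%N)).
by case: (e1 X n %% 4)%N => [|[|[|[|r]]]] //= _; case: (odd (WPt p x)).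
Qed.
End Closed.


Local Close Scope ring_scope.


Section Weights.
Variable n : nat.
Implicit Types x y : Z2n n.
Definition Ws (S : pred 'I_n) x := (\sum_(i < n | S i) x i)%N.

Lemma odd_Ws_add S x y : odd (Ws S (z2add x y)) = odd (Ws S x) (+) odd (Ws S y).
Proof.
apply: toZ_inj; rewrite toZ_addb !toZ_odd /Ws !natr_sum -big_split /=.
by apply: eq_bigr=> i _; rewrite ffunE -[X in _ = X]toZ_addb.
Qed.

Definition Ev (k : nat) : Z2n n := [ffun i : 'I_n => (i : nat) == k].

Lemma Ws_Ev S k : Ws S (Ev k) = [exists i : 'I_n, ((i : nat) == k) && S i].
Proof.
case: (boolP [exists _, _]).
  case/existsP=> i0 /andP[/eqP e0 S0].
  rewrite /Ws (bigD1 i0) //= big1 ?addn0; first by rewrite ffunE e0 eqxx.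
  move=> i /andP[_ ne]; rewrite ffunE; case: eqP => // ei.
  by move: ne; rewrite -(inj_eq val_inj) /= ei e0 eqxx.
move=> /existsPn h; rewrite /Ws big1 // => i Si; rewrite ffunE.
by move: (h i); rewrite Si andbT => /negbTE ->.
Qed.

Lemma Ws_z0 S : Ws S (z0 n) = 0%N.
Proof. by rewrite /Ws big1 // => i _; rewrite ffunE. Qed.

Lemma Wt_Ws x : Wt x = Ws predT x. Proof. by []. Qed.
Lemma WPt_Ws p x : WPt p x = Ws (fun i => (i : nat) < p)%N x. Proof. by []. Qed.

Lemma Ws_split (S : pred 'I_n) x : Wt x = (Ws S x + Ws (predC S) x)%N.
Proof. by rewrite /Wt /Ws (bigID S) /=. Qed.
End Weights.

Section IsoI.
Variables (p q : nat).
Hypotheses (hp : (1 <= p)%N) (hq : (1 <= q)%N).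
Local Notation n := (p + q)%N.

Definition vI : Z2n n := z2add (Ev n 0) (Ev n n.-1).
Definition TI (x : Z2n n) : Z2n n := z2add x (if odd (Wt x) then vI else z0 n).
Definition RevI (x : Z2n n) : Z2n n := [ffun j => x (rev_ord j)].
Definition AI x := RevI (TI x).

Lemma ex_ord (S : pred 'I_n) k (hk : (k < n)%N) : S (Ordinal hk) ->
  [exists i : 'I_n, ((i : nat) == k) && S i] = true.
Proof. by move=> h; apply/existsP; exists (Ordinal hk); rewrite /= eqxx. Qed.

Lemma vI_Wt : odd (Wt vI) = false.
Proof.
rewrite !Wt_Ws odd_Ws_add !Ws_Ev.
have h0 : (0 < n)%N by rewrite addn_gt0 hp.
have h1 : (n.-1 < n)%N by rewrite prednK // leqnn.
by rewrite (@ex_ord predT 0 h0 isT) (@ex_ord predT _ h1 isT).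
Qed.

Lemma vI_WPt : odd (WPt p vI) = true.
Proof.
rewrite !WPt_Ws odd_Ws_add !Ws_Ev.
have h0 : (0 < n)%N by rewrite addn_gt0 hp.
rewrite (@ex_ord (fun i : 'I_n => (i : nat) < p)%N 0 h0 hp).
rewrite (_ : [exists i : 'I_n, ((i : nat) == n.-1) && _] = false) //.
apply/existsPn=> i; apply/negP=> /andP[/eqP e hi]; move: hi; rewrite e.
by rewrite -subn1 ltn_subLR ?addn_gt0 ?hp // addnC ltn_add2r ltnNge hq.
Qed.

Lemma TI_Wt x : odd (Wt (TI x)) = odd (Wt x).
Proof. by rewrite /TI !Wt_Ws odd_Ws_add; case: ifP => _; rewrite ?Ws_z0 -?Wt_Ws ?vI_Wt ?addbF. Qed.

Lemma TI_lin x y : TI (z2add x y) = z2add (TI x) (TI y).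
Proof.
rewrite /TI !Wt_Ws odd_Ws_add -!Wt_Ws.
move: (odd (Wt x)) (odd (Wt y)) vI => a b v.
by case: a; case: b; apply/ffunP=> i; rewrite !ffunE; case: (x i); case: (y i); case: (v i).
Qed.

Lemma TIK x : TI (TI x) = x.
Proof.
rewrite {1}/TI TI_Wt /TI -z2addA.
by case: (odd (Wt x)); rewrite ?z2addxx ?z2addx0 ?z2add0.
Qed.

Lemma RevI_lin x y : RevI (z2add x y) = z2add (RevI x) (RevI y).
Proof. by apply/ffunP=> i; rewrite !ffunE. Qed.
Lemma RevIK x : RevI (RevI x) = x.
Proof. by apply/ffunP=> i; rewrite !ffunE rev_ordK. Qed.

Lemma Wt_RevI x : Wt (RevI x) = Wt x.
Proof.
rewrite /Wt [RHS](reindex_inj rev_ord_inj) /=; apply: eq_bigr=> j _.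
by rewrite ffunE.
Qed.

Lemma WPt_RevI x : WPt q (RevI x) = Ws (predC (fun i : 'I_n => (i : nat) < p)%N) x.
Proof.
rewrite /WPt /Ws (reindex_inj rev_ord_inj) /=; apply: eq_big=> [i|i _].
  rewrite /=; move: (ltn_ord i) => hi; apply/idP/idP => h; lia.
by rewrite ffunE rev_ordK.
Qed.

Lemma odd_mod4 w : odd w -> (w %% 4 != 0)%N.
Proof. by move=> h; apply/negP=> /eqP e; move: h; rewrite -(odd_mod w (d:=4)) // e. Qed.

Lemma AI_al x : al q (AI x) = al p x.
Proof.
rewrite /AI !al_closed Wt_RevI WPt_RevI.
have hs := Ws_split (fun i : 'I_n => (i : nat) < p)%N (TI x).
have e1 : odd (Ws (predC (fun i : 'I_n => (i : nat) < p)%N) (TI x))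
   = odd (Wt (TI x)) (+) odd (WPt p (TI x)).
  by rewrite hs oddD WPt_Ws addbC addbA addbb.
rewrite e1 TI_Wt.
case h: (odd (Wt x)).
  have h' : odd (Wt (TI x)) by rewrite TI_Wt.
  rewrite (odd_mod4 h) (odd_mod4 h') /TI h WPt_Ws odd_Ws_add -!WPt_Ws vI_WPt.
  by case: (odd (WPt p x)).
by rewrite /TI h z2addx0.
Qed.

Lemma AI_bij : bijective AI.
Proof.
exists (fun x => TI (RevI x)) => x; rewrite /AI.
  by rewrite RevIK TIK.
by rewrite TIK RevIK.
Qed.

Lemma AI_lin x y : AI (z2add x y) = z2add (AI x) (AI y).
Proof. by rewrite /AI TI_lin RevI_lin. Qed.

Theorem isoI (R : realType) : graded_iso R n p q.
Proof. exact: (iso_of_A R AI_lin AI_bij AI_al). Qed.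
End IsoI.


Local Close Scope ring_scope.


Lemma odd_Ws_pred n (S S1 S2 : pred 'I_n) (x : Z2n n) :
  (forall i, S i = S1 i (+) S2 i) -> odd (Ws S x) = odd (Ws S1 x) (+) odd (Ws S2 x).
Proof.
move=> hS; apply: toZ_inj; rewrite toZ_addb !toZ_odd /Ws !natr_sum.
rewrite (big_mkcond S) (big_mkcond S1) (big_mkcond S2) -big_split /=.
apply: eq_bigr=> i _; rewrite hS.
by case: (S1 i); case: (S2 i) => //=; rewrite ?addr0 ?add0r // -/(toZ (x i)) z2_xx.
Qed.

Section IsoII.
Variables (p q : nat).
Hypotheses (hp : (1 <= p)%N) (hq : (1 <= q)%N).
Local Notation n := (p + (q + 4))%N.

Definition Bn (m : nat) : bool := (m == 0)%N || ((p <= m)%N && (m < p + 5)%N).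
Definition oneB : Z2n n := [ffun i : 'I_n => Bn i].
Definition BB : pred 'I_n := fun i => Bn i.

Lemma h0 : (0 < n)%N. Proof. lia. Qed.
Lemma h4 : (p + 4 < n)%N. Proof. lia. Qed.
Definition o0 : 'I_n := Ordinal h0.
Definition o4 : 'I_n := Ordinal h4.
Definition Sw (x : Z2n n) : Z2n n := [ffun i => x (tperm o0 o4 i)].
Definition AII (x : Z2n n) : Z2n n := z2add (Sw x) (if odd (Ws BB x) then oneB else z0 n).

Lemma sum_split5 (G : nat -> nat) :
  (\sum_(0 <= i < n) G i = G 0 + \sum_(1 <= i < p) G i
     + (G p + G p.+1 + G p.+2 + G p.+3 + G p.+4) + \sum_(p + 5 <= i < n) G i)%N.
Proof.
rewrite (@big_cat_nat _ _ _ (p + 5)) /=; last by lia. 2: by [].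
rewrite (@big_cat_nat _ _ _ p) /=; [|lia|lia].
rewrite (@big_cat_nat _ _ _ 1) /=; [|lia|lia].
rewrite big_nat1; congr (_ + _)%N; congr (_ + _)%N.
rewrite big_ltn; last by lia.
rewrite big_ltn; last by lia.
rewrite big_ltn; last by lia.
rewrite big_ltn; last by lia.
rewrite big_ltn; last by lia.
rewrite big_geq; last by lia.
by rewrite !addnA addn0.
Qed.

Lemma Bn_mid k : (k < 5)%N -> Bn (p + k).
Proof. by move=> hk; rewrite /Bn; apply/orP; right; apply/andP; split; lia. Qed.

Lemma sum_mid0 (G : nat -> nat) : (forall i, (1 <= i < p)%N -> G i = 0%N) ->
  (\sum_(1 <= i < p) G i = 0)%N.
Proof. by move=> h; rewrite big_nat_cond big1 // => i /andP[hi _]; apply: h. Qed.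

Lemma sum_end0 (G : nat -> nat) : (forall i, (p + 5 <= i)%N -> G i = 0%N) ->
  (\sum_(p + 5 <= i < n) G i = 0)%N.
Proof. by move=> h; rewrite big_nat_cond big1 // => i /andP[/andP[hi _] _]; apply: h. Qed.

Lemma Wt_oneB : Wt oneB = 6%N.
Proof.
rewrite /Wt (eq_bigr (fun i : 'I_n => (Bn i : nat))); last by move=> i _; rewrite ffunE.
rewrite -(big_mkord xpredT (fun i => (Bn i : nat))) sum_split5.
rewrite sum_mid0; last by move=> i hi; rewrite /Bn; case: eqP => [|_] /=; [lia|]; case: leqP => //; lia.
rewrite sum_end0; last by move=> i hi; rewrite /Bn; case: eqP => [|_] /=; [lia|]; case: leqP => //=; case: ltnP => //; lia.
rewrite -(addn0 p) -addnS -addnS -addnS -addnS !Bn_mid //.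
Qed.

Lemma WPt_oneB : WPt (p + 4) oneB = 5%N.
Proof.
rewrite /WPt big_mkcond /=.
rewrite (eq_bigr (fun i : 'I_n => (((i : nat) < p + 4)%N && Bn i : nat))); last first.
  by move=> i _; rewrite ffunE; case: (_ < _)%N.
rewrite -(big_mkord xpredT (fun i => (((i : nat) < p + 4)%N && Bn i : nat))) sum_split5.
rewrite sum_mid0; last first.
  move=> i hi; rewrite /Bn; have -> : (i == 0)%N = false by lia.
  have -> : (p <= i)%N = false by lia.
  by rewrite /= andbF.
rewrite sum_end0; last by move=> i hi; case: ltnP => //=; lia.
have e m : (p <= m < p + 4)%N -> ((m < p + 4)%N && Bn m) = true.
  move=> hm; rewrite /Bn; apply/andP; split; first lia.
  by apply/orP; right; apply/andP; split; lia.
rewrite (e p) ?(e p.+1) ?(e p.+2) ?(e p.+3); try lia.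
have -> : (p.+4 < p + 4)%N = false by lia.
have -> : (0 < p + 4)%N by lia.
by rewrite /= addn0.
Qed.

Lemma BB_sw i : BB (tperm o0 o4 i) = BB i.
Proof.
case: tpermP => [->|->|] //; rewrite /BB /Bn /=.
  have -> : (p <= p + 4 < p + 5)%N by lia.
  by rewrite orbT.
have -> : (p <= p + 4 < p + 5)%N by lia.
  by rewrite orbT.
Qed.

Lemma Sw_lin x y : Sw (z2add x y) = z2add (Sw x) (Sw y).
Proof. by apply/ffunP=> i; rewrite !ffunE. Qed.
Lemma SwK x : Sw (Sw x) = x.
Proof. by apply/ffunP=> i; rewrite !ffunE tpermK. Qed.
Lemma Sw_oneB : Sw oneB = oneB.
Proof. by apply/ffunP=> i; rewrite !ffunE; exact: BB_sw. Qed.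
Lemma Ws_Sw (S : pred 'I_n) x : (forall i, S (tperm o0 o4 i) = S i) -> Ws S (Sw x) = Ws S x.
Proof.
move=> hS; rewrite /Ws [RHS](reindex_inj (@perm_inj _ (tperm o0 o4))) /=.
by apply: eq_big=> [i|i _]; rewrite ?hS // ffunE.
Qed.
Lemma Wt_Sw x : Wt (Sw x) = Wt x.
Proof. by rewrite !Wt_Ws Ws_Sw. Qed.
Lemma WsB_Sw x : Ws BB (Sw x) = Ws BB x.
Proof. by rewrite Ws_Sw // => i; exact: BB_sw. Qed.

Lemma WPt_Sw x : odd (WPt (p + 4) (Sw x)) = odd (WPt p x) (+) odd (Ws BB x).
Proof.
have -> : WPt (p + 4) (Sw x) = Ws (fun i => (tperm o0 o4 i < p + 4)%N) x.
  rewrite /WPt /Ws [RHS](reindex_inj (@perm_inj _ (tperm o0 o4))) /=.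
  by apply: eq_big=> [i|i _]; rewrite ?tpermK // ffunE.
rewrite WPt_Ws; apply: odd_Ws_pred => i.
case: tpermP => [->|->|]; rewrite /BB /Bn /=.
- have -> : (p + 4 < p + 4)%N = false by lia.
  by have -> : (0 < p)%N by lia.
- have -> : (p + 4 < p)%N = false by lia.
  have -> : (p <= p + 4 < p + 5)%N by lia.
  rewrite orbT /=; lia.
move=> n0 n4.
have i0 : (i : nat) != 0%N by apply/eqP => e; apply: n0; apply/val_inj.
have i4 : (i : nat) != (p + 4)%N by apply/eqP => e; apply: n4; apply/val_inj.
rewrite (negbTE i0) /=; move: i0 i4; case: (ltnP i (p + 4)) => h1; case: (ltnP i p) => h2;
  case: (leqP p i) => h3; case: (ltnP i (p + 5)) => h4 //= e1 e2; lia.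
Qed.

Lemma Wt_add_oneB y : (Wt (z2add y oneB) + 2 * Ws BB y = Wt y + 6)%N.
Proof.
rewrite -Wt_oneB /Wt /Ws (big_mkcond BB) /= big_distrr /= -!big_split /=.
by apply: eq_bigr=> i _; rewrite !ffunE /BB; case: (Bn i); case: (y i).
Qed.

Lemma AII_al x : al (p + 4) (AII x) = al p x.
Proof.
rewrite !al_closed /AII.
case hB: (odd (Ws BB x)).
  rewrite WPt_Ws odd_Ws_add -!WPt_Ws WPt_Sw WPt_oneB hB.
  have hw := Wt_add_oneB (Sw x); rewrite Wt_Sw WsB_Sw in hw.
  have -> : (Wt (z2add (Sw x) oneB) %% 4 = Wt x %% 4)%N.
    have hw2 := odd_double_half (Ws BB x); rewrite hB -addnn in hw2.
    move: hw hw2; set k := (Ws BB x)./2; lia.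
  by case: (odd (WPt p x)).
by rewrite z2addx0 Wt_Sw WPt_Sw hB addbF.
Qed.

Lemma WsB_oneB : odd (Ws BB oneB) = false.
Proof.
have -> : Ws BB oneB = Wt oneB.
  rewrite /Ws /Wt [RHS](bigID BB) /= -[LHS]addn0; congr (_ + _)%N.
  by rewrite big1 // => i /negbTE; rewrite ffunE /BB => ->.
by rewrite Wt_oneB.
Qed.

Lemma AII_lin x y : AII (z2add x y) = z2add (AII x) (AII y).
Proof.
rewrite /AII Sw_lin odd_Ws_add.
move: (odd (Ws BB x)) (odd (Ws BB y)) oneB (Sw x) (Sw y) => a b v u w.
by case: a; case: b; apply/ffunP=> i; rewrite !ffunE; case: (u i); case: (w i); case: (v i).
Qed.

Lemma AIIK x : AII (AII x) = x.
Proof.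
have e : odd (Ws BB (AII x)) = odd (Ws BB x).
  rewrite /AII odd_Ws_add WsB_Sw; case: (odd (Ws BB x)); rewrite ?WsB_oneB ?Ws_z0 //.
rewrite {1}/AII e /AII Sw_lin SwK.
have Sw0 : Sw (z0 n) = z0 n by apply/ffunP=> i; rewrite !ffunE.
case: (odd (Ws BB x)); rewrite ?Sw_oneB ?Sw0 ?z2addx0 //.
by rewrite -z2addA z2addxx z2addx0.
Qed.

Theorem isoII (R : realType) : graded_iso R n p (p + 4).
Proof.
apply: (iso_of_A R AII_lin _ AII_al).
by exists AII; move=> x; rewrite AIIK.
Qed.
End IsoII.


Local Open Scope ring_scope.


Section Extract.
Variables (R : realType) (n : nat).
Implicit Types (x y : Z2n n) (a b : Oelt R n).

Lemma OuE x z : (Ou R x) z = (z == x)%:R. Proof. by rewrite ffunE. Qed.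

Lemma OmulU p c c' x y :
  Omul p (Oscale c (Ou R x)) (Oscale c' (Ou R y))
  = Oscale (c * c' * (-1) ^+ @Of n p x y) (Ou R (z2add x y)).
Proof.
apply/ffunP=> z; rewrite !ffunE (bigD1 x) //= [X in _ + X]big1 ?addr0; last first.
  by move=> x' nx; rewrite big1 // => y' _; rewrite !ffunE (negbTE nx) /= !mulr0 !mul0r.
rewrite big_mkcond (bigD1 y) //= [X in _ + X]big1 ?addr0; last first.
  by move=> y' ny; rewrite !ffunE (negbTE ny); case: ifP => _; rewrite ?mulr0.
rewrite !ffunE !eqxx eq_sym; case: ifP => _ /=; ring.
Qed.

Lemma OscaleU_inj c c' y y' : c != 0 ->
  Oscale c (Ou R y) = Oscale c' (Ou R y') -> y = y' /\ c = c'.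
Proof.
move=> c0 /ffunP /(_ y); rewrite !ffunE eqxx mulr1.
case: eqP => [-> ->|_]; first by rewrite mulr1.
by rewrite mulr0 => e; move: c0; rewrite e eqxx.
Qed.

Lemma Oscale1 a : Oscale 1 a = a.
Proof. by apply/ffunP=> z; rewrite ffunE mul1r. Qed.

Lemma iso_inv p p' : graded_iso R n p p' ->
  exists sigma : Z2n n -> Z2n n, injective sigma /\ forall x, al p' (sigma x) = al p x.
Proof.
case=> phi [lin bij mul hom].
have phiinj : injective phi := bij_inj bij.
have phi0 : phi 0 = 0.
  have := lin 1 0 0; rewrite !Oscale1 addr0 => e.
  by apply: (addrI (phi 0)); rewrite addr0 -e.
have phiZ c a : phi (Oscale c a) = Oscale c (phi a).
  by have := lin c a 0; rewrite !addr0 phi0 addr0.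
have hx x : exists cy : R * Z2n n, phi (Ou R x) = Oscale cy.1 (Ou R cy.2).
  have [c [y e]] := hom (Ou R x) (ex_intro _ 1 (ex_intro _ x (esym (Oscale1 _)))).
  by exists (c, y).
have [f hf] := fin_all_exists hx.
pose c x := (f x).1; pose sg x := (f x).2.
have cnz x : c x != 0.
  apply/eqP=> e; have := hf x; rewrite -/(c x) e => h.
  have h0 : phi (Ou R x) = phi 0.
    by rewrite h phi0; apply/ffunP=> z; rewrite !ffunE mul0r.
  move/phiinj/ffunP: h0 => /(_ x); rewrite !ffunE eqxx => /eqP; rewrite oner_eq0.
  by [].
have OuOu x : Omul p (Ou R x) (Ou R x) = Oscale ((-1) ^+ al p x) (Ou R (z0 n)).
  rewrite -(Oscale1 (Ou R x)) OmulU z2addxx !mul1r.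
  by rewrite /al.
have s0 : sg (z0 n) = z0 n /\ c (z0 n) = 1.
  have := mul (Ou R (z0 n)) (Ou R (z0 n)); rewrite OuOu.
  have -> : al p (z0 n) = false by rewrite /al Of_x0.
  rewrite expr0 Oscale1 hf OmulU z2addxx => e.
  have [e1 e2] := OscaleU_inj (cnz (z0 n)) e.
  split; first exact: e1.
  move: e2; rewrite e1 Of_x0 expr0 mulr1 => e2.
  by apply: (mulfI (cnz (z0 n))); rewrite mulr1 -e2.
have hal x : al p' (sg x) = al p x.
  have := mul (Ou R x) (Ou R x); rewrite OuOu phiZ hf (hf x) OmulU z2addxx.
  rewrite -/(c _) -/(sg _) -/(c _) -/(sg _) (proj1 s0) (proj2 s0) => /ffunP /(_ (z0 n)).
  rewrite !ffunE eqxx mulr1 mulr1 mulr1 -/(al p' (sg x)).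
  case: (al p x); case: (al p' (sg x)) => //=; rewrite ?expr1 ?expr0 ?mulr1 => h.
  - have : 0 <= c x ^+ 2 by exact: sqr_ge0.
    by rewrite expr2 -h ler0N1.
  - have : 0 <= c x ^+ 2 by exact: sqr_ge0.
    move: h; rewrite mulrN1 expr2 => /eqP; rewrite eq_sym eqr_oppLR => /eqP ->.
    by rewrite ler0N1.
exists sg; split => //.
move=> x y e; apply/eqP; apply/negP=> /negP nxy.
have h : phi (Oscale (c y) (Ou R x) + Oscale (- c x) (Ou R y)) = phi 0.
  rewrite lin phiZ hf (hf y) -/(c _) -/(sg _) -/(c _) -/(sg _) e phi0.
  by apply/ffunP=> z; rewrite !ffunE; ring.
move/phiinj/ffunP: h => /(_ x); rewrite !ffunE eqxx (negbTE nxy) mulr0 addr0 mulr1.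
by move/eqP; rewrite (negbTE (cnz y)).
Qed.
End Extract.


Local Open Scope ring_scope.


Definition Sig (n p : nat) : algC := \sum_(x : Z2n n) (-1) ^+ al p x.

Lemma iso_Sig (R : realType) n p p' : graded_iso R n p p' -> Sig n p = Sig n p'.
Proof.
move=> /iso_inv [sg [sinj hs]].
rewrite /Sig [RHS](reindex_inj sinj) /=; apply: eq_bigr=> x _; by rewrite hs.
Qed.

Lemma prod_split_p (n p : nat) (a b : algC) : (p <= n)%N ->
  \prod_(i < n) (if ((i : nat) < p)%N then a else b) = a ^+ p * b ^+ (n - p).
Proof.
move=> hpn.
rewrite -(big_mkord xpredT (fun i => if (i < p)%N then a else b)).
rewrite (@big_cat_nat _ _ _ p) //=.
rewrite (eq_big_nat _ _ (F2 := fun _ => a)); last by move=> i /andP[_ ->].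
rewrite (eq_big_nat _ _ (F1 := fun i => if (i < p)%N then a else b) (F2 := fun _ => b)); last first.
  by move=> i /andP[h _]; rewrite ltnNge h.
by rewrite !prodr_const_nat subn0.
Qed.

Lemma char_sum (n p : nat) (z : algC) : (p <= n)%N ->
  \sum_(x : Z2n n) (-1) ^+ WPt p x * z ^+ Wt x = (1 - z) ^+ p * (1 + z) ^+ (n - p).
Proof.
move=> hpn.
pose G (i : 'I_n) (b : bool) : algC := if b then (if ((i : nat) < p)%N then - z else z) else 1.
have e1 : \prod_(i < n) \sum_(b : bool) G i b = (1 - z) ^+ p * (1 + z) ^+ (n - p).
  rewrite -prod_split_p //; apply: eq_bigr=> i _; rewrite big_bool /G /=.
  by case: (_ < _)%N; rewrite addrC.
rewrite -e1 bigA_distr_bigA /=; apply: eq_bigr=> x _.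
have -> : \prod_(i < n) G i (x i) = \prod_(i < n) ((-1) ^+ (((i : nat) < p)%N && x i) * z ^+ x i).
  apply: eq_bigr=> i _; rewrite /G; case: (x i); case: (_ < _)%N => /=;
  by rewrite ?expr1 ?expr0 ?mul1r ?mulr1 ?mulN1r.
rewrite big_split /= !prodrXr; congr (_ ^+ _ * _ ^+ _).
by rewrite /WPt big_mkcond; apply: eq_bigr=> i _; case: (_ < _)%N.
Qed.

Lemma i4 : ('i : algC) ^+ 4 = 1.
Proof. by rewrite (_ : 4 = 2 * 2)%N // exprM sqrCi -signr_odd /= expr0. Qed.

Definition S4 (w : nat) : algC := \sum_(k < 4) ('i ^+ k : algC) ^+ w.
Lemma sum_i4 (w : nat) : S4 w = (4 * (w %% 4 == 0)%N)%:R.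
Proof.
rewrite /S4.
under eq_bigr do rewrite exprAC -(expr_mod _ i4).
rewrite !big_ord_recr big_ord0 /=.
have E (z : algC) : 0 + z ^+ 0 + z ^+ 1 + z ^+ 2 + z ^+ 3 = (1 + z) * (1 + z ^+ 2) by ring.
rewrite E; move: (ltn_pmod w (isT : (0 < 4)%N)).
case: (w %% 4)%N => [|[|[|[|r]]]] //= _.
- by rewrite expr0 expr1n; ring.
- by rewrite expr1 sqrCi subrr mulr0.
- by rewrite sqrCi addrN mul0r.
- by rewrite -exprM (_ : 3 * 2 = 4 + 2)%N // exprD i4 mul1r sqrCi subrr mulr0.
Qed.

Lemma Sig_formula (n p : nat) : (p <= n)%N ->
  2 * Sig n p = (1 - 'i) ^+ p * (1 + 'i) ^+ (n - p) + (1 + 'i) ^+ p * (1 - 'i) ^+ (n - p)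
     + 2 ^+ p * 0 ^+ (n - p) - 0 ^+ p * 2 ^+ (n - p).
Proof.
move=> hpn.
have e (x : Z2n n) : 2 * (-1) ^+ al p x = (-1) ^+ WPt p x * (- 2 + S4 (Wt x)).
  rewrite al_closed signr_addb signr_odd sum_i4 [_ * (-1) ^+ WPt p x]mulrC mulrCA; congr (_ * _).
  by case: (Wt x %% 4 == 0)%N; rewrite /= ?expr1 ?expr0 ?muln1 ?muln0; ring.
rewrite /Sig mulr_sumr (eq_bigr _ (fun x _ => e x)).
under eq_bigr do rewrite mulrDr /S4 mulr_sumr.
rewrite big_split /= -mulr_suml exchange_big /=.
have c1 : \sum_(x : Z2n n) (-1) ^+ WPt p x = (1 - 1) ^+ p * (1 + 1) ^+ (n - p) :> algC.
  by rewrite -(char_sum 1 hpn); apply: eq_bigr => x _; rewrite expr1n mulr1.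
rewrite c1.
rewrite !big_ord_recr big_ord0 /= !char_sum //.
rewrite expr0 expr1 sqrCi.
have -> : ('i : algC) ^+ 3 = - 'i by rewrite exprS sqrCi mulrN1.
rewrite !subrr !opprK.
rewrite (_ : 1 + 1 = 2 :> algC) //.
ring.
Qed.


Local Open Scope ring_scope.


Definition reI (k : nat) : int := match k with 0%N => 1 | 2%N => -1 | _ => 0 end.
Definition imI (k : nat) : int := match k with 1%N => 1 | 3%N => -1 | _ => 0 end.

Lemma ipowE (k : nat) : ('i : algC) ^+ k = (reI (k %% 4))%:~R + (imI (k %% 4))%:~R * 'i.
Proof.
rewrite -(expr_mod _ i4); move: (ltn_pmod k (isT : (0 < 4)%N)).
case: (k %% 4)%N => [|[|[|[|r]]]] //= _.
- by rewrite expr0 mul0r addr0.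
- by rewrite expr1 mul1r add0r.
- by rewrite sqrCi mul0r addr0.
- by rewrite exprS sqrCi mulrN1 mulN1r add0r.
Qed.

Lemma lin_indep (a b : int) : a%:~R + b%:~R * 'i = 0 :> algC -> a = 0 /\ b = 0.
Proof.
move=> h.
have h2 : (a ^+ 2 + b ^+ 2)%:~R = 0 :> algC.
  have -> : (a ^+ 2 + b ^+ 2)%:~R = (a%:~R + b%:~R * 'i) * (a%:~R - b%:~R * 'i) :> algC.
    rewrite rmorphD !rmorphXn /=.
    transitivity ((a%:~R : algC) ^+ 2 - (b%:~R) ^+ 2 * 'i ^+ 2); last ring.
    by rewrite sqrCi mulrN1 opprK.
  by rewrite h mul0r.
move/eqP: h2; rewrite intr_eq0 => /eqP h3.
have ha : a ^+ 2 = 0.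
  apply/eqP; rewrite eq_le sqr_ge0 andbT; rewrite -h3 lerDl; exact: sqr_ge0.
have hb : b ^+ 2 = 0 by move: h3; rewrite ha add0r.
by split; apply/eqP; rewrite -sqrf_eq0; apply/eqP.
Qed.

Lemma resid_check (a b a' b' : nat) : (a < 4)%N -> (b < 4)%N -> (a' < 4)%N -> (b' < 4)%N ->
  ((a + b) %% 4 = (a' + b') %% 4)%N -> reI a + reI b = reI a' + reI b' ->
  imI a + imI b = imI a' + imI b' -> (a' == a) || (a' == b).
Proof.
by case: a => [|[|[|[|a]]]] //; case: b => [|[|[|[|b]]]] //;
   case: a' => [|[|[|[|a']]]] //; case: b' => [|[|[|[|b']]]].
Qed.


Local Open Scope ring_scope.


Lemma onepi : 1 + 'i = 'i * (1 - 'i) :> algC.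
Proof. by rewrite mulrBr mulr1 -expr2 sqrCi opprK addrC. Qed.

Lemma Sig_mid n p : (0 < p)%N -> (p < n)%N ->
  2 * Sig n p = (1 - 'i) ^+ n * ('i ^+ p + 'i ^+ (n - p)).
Proof.
move=> h1 h2; rewrite Sig_formula; last by lia.
rewrite !expr0n (_ : (p == 0)%N = false); last by lia.
rewrite (_ : (n - p == 0)%N = false); last by lia.
rewrite /= !mulr0 !mul0r addr0 subr0 onepi !exprMn.
set q := (n - p)%N; have hn : n = (p + q)%N by rewrite /q; lia.
by rewrite hn exprD; ring.
Qed.

Lemma Sig_nn n : (0 < n)%N -> 2 * Sig n n = 2 ^+ n + (1 - 'i) ^+ n * (1 + 'i ^+ n).
Proof.
move=> h; rewrite Sig_formula // subnn !expr0 !mulr1 !expr0n (_ : (n == 0)%N = false); last by lia.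
by rewrite /= subr0 onepi exprMn; ring.
Qed.

Lemma Sig_n0 n : (0 < n)%N -> 2 * Sig n 0 = - 2 ^+ n + (1 - 'i) ^+ n * (1 + 'i ^+ n).
Proof.
move=> h; rewrite Sig_formula // subn0 !expr0 !mul1r !expr0n (_ : (n == 0)%N = false); last by lia.
by rewrite /= onepi exprMn; ring.
Qed.

Lemma u_neq0 : (1 - 'i : algC) != 0.
Proof.
apply/eqP=> h; have : ('i : algC) = 1 by apply/eqP; rewrite eq_sym -subr_eq0 h.
move=> e; have := sqrCi algC; rewrite e expr1n => /eqP.
by rewrite -subr_eq0 opprK (_ : 1 + 1 = 2%:R) // pnatr_eq0.
Qed.

Lemma mid_resid n p p' : (0 < p)%N -> (p < n)%N -> (0 < p')%N -> (p' < n)%N ->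
  Sig n p = Sig n p' -> (p' %% 4 == p %% 4)%N || (p' %% 4 == (n - p) %% 4)%N.
Proof.
move=> h1 h2 h3 h4 e.
have e2 : 2 * Sig n p = 2 * Sig n p' by rewrite e.
rewrite !Sig_mid // in e2.
have e3 := mulfI (expf_neq0 n u_neq0) e2.
move: e3; rewrite !ipowE => /eqP; rewrite -subr_eq0 => /eqP e4.
have [hr hi] : (reI (p %% 4) + reI ((n - p) %% 4) - reI (p' %% 4) - reI ((n - p') %% 4) = 0)
   /\ (imI (p %% 4) + imI ((n - p) %% 4) - imI (p' %% 4) - imI ((n - p') %% 4) = 0).
  apply: lin_indep; rewrite -e4 !rmorphB !rmorphD /=; ring.
apply: (resid_check (b' := ((n - p') %% 4)%N)); rewrite ?ltn_pmod //.
- rewrite !modnDm (subnKC (ltnW h2)) (subnKC (ltnW h4)) //.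
- by apply/eqP; rewrite -subr_eq0; apply/eqP; rewrite -hr; ring.
- by apply/eqP; rewrite -subr_eq0; apply/eqP; rewrite -hi; ring.
Qed.

Lemma normu2 : `|1 - 'i : algC| ^+ 2 = 2.
Proof.
rewrite normCK rmorphB /= conjC1 conjCi opprK.
transitivity (1 - ('i : algC) ^+ 2); first ring.
by rewrite sqrCi opprK.
Qed.

Lemma norm4 (a b c d : algC) : `|a| = 1 -> `|b| = 1 -> `|c| = 1 -> `|d| = 1 ->
  `|a + b - c - d| <= 4.
Proof.
move=> ha hb hc hd.
have h : `|a + b - c - d| <= `|a| + `|b| + `|c| + `|d|.
  apply: (le_trans (ler_normB _ _)); rewrite lerD2r.
  apply: (le_trans (ler_normB _ _)); rewrite lerD2r; exact: ler_normD.
apply: (le_trans h); rewrite ha hb hc hd.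
by have -> : (1 + 1 + 1 + 1 : algC) = 4 by ring.
Qed.

Lemma normi k : `|('i : algC) ^+ k| = 1.
Proof. by rewrite normrX normCi expr1n. Qed.

Lemma norm_bound n (w : algC) : (5 <= n)%N -> `|w| <= 4 -> 2 ^+ n != (1 - 'i) ^+ n * w.
Proof.
move=> hn hw; apply/eqP=> e.
set a := `|1 - 'i : algC| ^+ n; set W := `|w|.
have e2 : (2 : algC) ^+ n = a * W.
  by rewrite /a /W -normrX -normrM -e normrX ger0_norm.
have ha : a * a = 2 ^+ n by rewrite /a -exprMn -expr2 normu2.
have e3 : (2 : algC) ^+ n * 2 ^+ n = 2 ^+ n * (W * W) by rewrite [in LHS]e2 mulrACA ha.
have hW : W * W <= 16.
  have := ler_pM (normr_ge0 w) (normr_ge0 w) hw hw.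
  by have -> : (4 * 4 : algC) = 16 by ring.
have e4 : (2 : algC) ^+ n <= 16.
  by rewrite -(ler_pM2l (exprn_gt0 n (ltr0Sn _ 1))) e3 ler_pM2l ?exprn_gt0 // ltr0Sn.
move: e4; rewrite -natrX ler_nat => e5.
have : (2 ^ 5 <= 2 ^ n)%N by rewrite leq_pexp2l.
by move=> h6; move: (leq_trans h6 e5).
Qed.

Lemma nn_ne_0 n : (0 < n)%N -> Sig n n != Sig n 0.
Proof.
move=> h; apply/eqP=> e.
have e2 : 2 * Sig n n = 2 * Sig n 0 by rewrite e.
rewrite Sig_nn // Sig_n0 // in e2.
move/addIr/eqP: e2; rewrite -subr_eq0 opprK -mulr2n -natrX -mulrnA pnatr_eq0.
by rewrite muln_eq0 expn_eq0.
Qed.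

Lemma nn_ne_mid n p : (5 <= n)%N -> (0 < p)%N -> (p < n)%N -> Sig n n != Sig n p.
Proof.
move=> hn h1 h2; apply/eqP=> e.
have e2' : 2 ^+ n + (1 - 'i) ^+ n * (1 + 'i ^+ n) = (1 - 'i) ^+ n * ('i ^+ p + 'i ^+ (n - p)) :> algC.
  transitivity (2 * Sig n n); first by rewrite Sig_nn //; lia.
  by rewrite e Sig_mid //; lia.
move: (@norm_bound n ('i ^+ p + 'i ^+ (n - p) - 1 - 'i ^+ n) hn).
rewrite norm4 ?normi ?normr1 // => /(_ isT) /eqP; apply.
by rewrite mulrBr mulrBr -e2' mulrDr; ring.
Qed.

Lemma n0_ne_mid n p : (5 <= n)%N -> (0 < p)%N -> (p < n)%N -> Sig n 0 != Sig n p.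
Proof.
move=> hn h1 h2; apply/eqP=> e.
have e2' : - 2 ^+ n + (1 - 'i) ^+ n * (1 + 'i ^+ n) = (1 - 'i) ^+ n * ('i ^+ p + 'i ^+ (n - p)) :> algC.
  transitivity (2 * Sig n 0); first by rewrite Sig_n0 //; lia.
  by rewrite e Sig_mid //; lia.
move: (@norm_bound n (1 + 'i ^+ n - 'i ^+ p - 'i ^+ (n - p)) hn).
rewrite norm4 ?normi ?normr1 // => /(_ isT) /eqP; apply.
apply/eqP; rewrite -subr_eq0; apply/eqP.
transitivity (- (- 2 ^+ n + (1 - 'i) ^+ n * (1 + 'i ^+ n) - (1 - 'i) ^+ n * ('i ^+ p + 'i ^+ (n - p))) : algC); first ring.
by rewrite e2' subrr oppr0.
Qed.


Local Close Scope ring_scope.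


Lemma Oreach_trans a b c : Oreach a b -> Oreach b c -> Oreach a c.
Proof. by elim=> [//|x y z s _ IH] h; apply: Oreach_step s (IH h). Qed.

Lemma shift_k p q k : (1 <= p)%N -> (1 <= q)%N -> Oreach (p, q + 4 * k)%N (p + 4 * k, q)%N.
Proof.
elim: k p => [|k IH] p hp hq; first by rewrite !muln0 !addn0; exact: Oreach_refl.
have -> : (q + 4 * k.+1 = (q + 4 * k) + 4)%N by lia.
apply: Oreach_step (Ostep_shift hp _) _; first by lia.
have -> : (p + 4 * k.+1 = (p + 4) + 4 * k)%N by lia.
by apply: IH => //; lia.
Qed.

Lemma unshift_k p q k : (1 <= p)%N -> (1 <= q)%N -> Oreach (p + 4 * k, q)%N (p, q + 4 * k)%N.
Proof.
elim: k q => [|k IH] q hp hq; first by rewrite !muln0 !addn0; exact: Oreach_refl.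
have -> : (p + 4 * k.+1 = (p + 4 * k) + 4)%N by lia.
apply: Oreach_step (Ostep_unshift _ hq) _; first by lia.
have -> : (q + 4 * k.+1 = (q + 4) + 4 * k)%N by lia.
by apply: IH => //; lia.
Qed.

Lemma reach_mod p q p' q' : (1 <= p)%N -> (1 <= q)%N -> (1 <= p')%N -> (1 <= q')%N ->
  (p + q = p' + q')%N -> (p' %% 4 = p %% 4)%N -> Oreach (p, q) (p', q').
Proof.
move=> hp hq hp' hq' hs hm.
case: (leqP p p') => hle.
  have : (p' == p %[mod 4])%N by rewrite hm.
  rewrite eqn_mod_dvd // => /dvdnP [k hk].
  have e1 : p' = (p + 4 * k)%N by lia.
  have e2 : q = (q' + 4 * k)%N by lia.
  by rewrite e1 e2; apply: shift_k.
have : (p == p' %[mod 4])%N by rewrite hm.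
rewrite eqn_mod_dvd ?(ltnW hle) // => /dvdnP [k hk].
have e1 : p = (p' + 4 * k)%N by lia.
have e2 : q' = (q + 4 * k)%N by lia.
by rewrite e1 e2; apply: unshift_k.
Qed.

Theorem mainTheorem1 (R : realType) :
  (* (i) *)
  (forall p q : nat, (1 <= p)%N -> (1 <= q)%N -> (3 <= p + q)%N ->
     Oiso R p q q p) /\
  (* (ii) *)
  (forall p q : nat, (1 <= p)%N -> (1 <= q)%N ->
     Oiso R p (q + 4) (p + 4) q) /\
  (* (iii) *)
  (forall p q p' q' : nat, (1 <= p)%N -> (1 <= q)%N -> (1 <= p')%N -> (1 <= q')%N ->
     (3 <= p + q)%N -> (p + q = p' + q')%N ->
     Oiso R p q p' q' -> Oreach (p, q) (p', q')) /\
  (* (iv) *)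
  (forall n : nat, (5 <= n)%N ->
     ~ Oiso R n 0 0 n /\
     (forall p q : nat, (p + q = n)%N -> (p, q) <> (n, 0%N) -> (p, q) <> (0%N, n) ->
        ~ Oiso R n 0 p q /\ ~ Oiso R 0 n p q)).
Proof.
split; [|split; [|split]].
- move=> p q hp hq _; split; first by rewrite addnC.
  exact: isoI.
- move=> p q hp hq; split; first by lia.
  exact: isoII.
- move=> p q p' q' hp hq hp' hq' h3 hs [_ hiso].
  have hS := iso_Sig hiso.
  have hpn : (p < p + q)%N by lia.
  have hp'n : (p' < p + q)%N by lia.
  have := mid_resid hp hpn hp' hp'n hS; rewrite addKn.
  case/orP=> /eqP hm; first exact: reach_mod.
  apply: Oreach_trans (Oreach_step (Ostep_swap hp hq h3) (Oreach_refl _)) _.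
  by apply: reach_mod => //; lia.
- move=> n hn; split.
    case=> _ hiso; have := iso_Sig hiso; rewrite addn0 => e.
    by move/eqP: (nn_ne_0 (n := n) ltac:(lia)); rewrite e.
  move=> p q hs h1 h2.
  have hp : (0 < p)%N.
    case: p hs h1 h2 => // hs _; rewrite add0n in hs; by rewrite hs.
  have hpn : (p < n)%N.
    case: (ltnP p n) => // hle; exfalso; apply: h1.
    have -> : p = n by lia.
    by have -> : q = 0%N by lia.
  split.
    case=> _ hiso; have := iso_Sig hiso; rewrite addn0 => e.
    by move/eqP: (nn_ne_mid hn hp hpn).
  case=> _ hiso; have := iso_Sig hiso; rewrite add0n => e.
  by move/eqP: (n0_ne_mid hn hp hpn).
Qed.
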